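(* Let $1\le p\le\infty$. Fix a positive integer $N$ (bound on the number of intervals) and a real $\lambda>0$ (lower bound on total length). Then persistent entropy is continuous on $(\mathcal{B}_F,d_p)$ restricted to such barcodes: for every $\varepsilon>0$ there exists $\delta>0$ such that for all $A,B\in\mathcal{B}_F$ with at most $N$ intervals each and with total lengths $L_a,L_b\ge\lambda$, $d_p(A,B)\le\delta$ implies $|E(A)-E(B)|\le\varepsilon$.
   Context: A persistence barcode is a finite multiset of intervals $[x,y]$, $x\le y$; $\mathcal{B}_F$ is the set of barcodes all of whose intervals have finite endpoints. For $A=\{[x_i^a,y_i^a]\}_{i=1}^{n_a}$, $\ell_i^a=y_i^a-x_i^a$, $L_a=\sum_i\ell_i^a$. $p$-th Wasserstein distance: pad the smaller barcode with zero-length intervals $[t,t]$ until both have $n_{\max}=\max\{n_a,n_b\}$ intervals; $d_p(A,B)=\big(\min_\gamma\sum_i\max\{|x_i^a-x^b_{\gamma(i)}|^p,|y_i^a-y^b_{\gamma(i)}|^p\}\big)^{1/p}$ for $p<\infty$ and $d_\infty(A,B)=\min_\gamma\max_i\max\{|x_i^a-x^b_{\gamma(i)}|,|y_i^a-y^b_{\gamma(i)}|\}$, minima over bijections $\gamma$ (and paddings). Persistent entropy: $E(A)=-\sum_i\frac{\ell_i^a}{L_a}\log\frac{\ell_i^a}{L_a}$ with $0\log0=0$. *)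

(* Defs.v *)
From HB Require Import structures.
From mathcomp Require Import all_boot all_order all_algebra all_fingroup.
From mathcomp Require Import all_classical all_reals all_analysis.
Set Implicit Arguments. Unset Strict Implicit. Unset Printing Implicit Defensive.
Import Order.TTheory GRing.Theory Num.Theory.
Local Open Scope ring_scope.
Local Open Scope classical_set_scope.

Section Barcodes.
Variable R : realType.

(* A barcode in B_F: a finite multiset of intervals [x,y] with finite
   endpoints, represented as a list of endpoint pairs (x, y). *)
Definition barcode := seq (R * R).

Definition wf_barcode (A : barcode) : bool := all (fun I => I.1 <= I.2) A.

Definition ilen (I : R * R) : R := I.2 - I.1.

Definition total_length (A : barcode) : R := \sum_(I <- A) ilen I.

Definition plogp (q : R) : R := if q == 0 then 0 else q * ln q.

Definition pentropy (A : barcode) : R :=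
  - \sum_(I <- A) plogp (ilen I / total_length A).

Definition icost (I J : R * R) : R := Num.max `|I.1 - J.1| `|I.2 - J.2|.

Definition pad (A : barcode) (t : seq R) : barcode := A ++ [seq (x, x) | x <- t].

(* the p-cost of a bijection s between padded barcodes of size n;
   p = +oo gives the bottleneck (max) cost *)
Definition match_cost (p : \bar R) (n : nat) (A B : barcode) (s : 'S_n) : R :=
  let c := fun i : 'I_n => icost (nth (0, 0) A i) (nth (0, 0) B (s i)) in
  match p with
  | r%:E => (\sum_(i < n) c i `^ r) `^ r^-1
  | _ => \big[Num.max/0]_(i < n) c i
  end.

Definition dW (p : \bar R) (A B : barcode) : R :=
  let n := maxn (size A) (size B) in
  inf [set c | exists (ta tb : seq R) (s : 'S_n),
        size ta = (n - size A)%N /\ size tb = (n - size B)%N /\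
        c = match_cost p (pad A ta) (pad B tb) s].

End Barcodes.

(* Main.v *)
Require Import Defs.
From HB Require Import structures.
From mathcomp Require Import all_boot all_order all_algebra all_fingroup.
From mathcomp Require Import all_classical all_reals all_analysis.
From mathcomp Require Import ring lra.
Import Order.TTheory GRing.Theory Num.Theory.
Local Open Scope ring_scope.

Lemma plogpE (R : realType) (q : R) : plogp q = q * ln q.
Proof. by rewrite /plogp; case: eqP => [->|]; rewrite ?mul0r. Qed.

Lemma nlogn_le (R : realType) (d : R) : 0 < d -> - (d * ln d) <= 2 * Num.sqrt d.
Proof.
move=> d0; set s := Num.sqrt d.
have s0 : 0 < s by rewrite sqrtr_gt0.
have ds : d = s * s by rewrite -expr2 sqr_sqrtr // ltW.
have lnd : ln d = ln s + ln s by rewrite ds lnM // posrE.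
have h : ln s^-1 < s^-1 by apply: ln_sublinear; rewrite invr_gt0.
rewrite lnV ?posrE // in h.
rewrite lnd ds.
have -> : - (s * s * (ln s + ln s)) = 2 * (s * s) * (- ln s) by ring.
have : s * (- ln s) <= s * s^-1 by apply: ler_wpM2l; [exact: ltW|exact: ltW].
rewrite mulfV ?gt_eqF // => h2.
have -> : 2 * (s * s) * - ln s = 2 * s * (s * - ln s) by ring.
have : s * (s * - ln s) <= s * 1 by apply: ler_wpM2l => //; exact: ltW.
rewrite mulr1; lra.
Qed.

Lemma plogp_cont (R : realType) (a b : R) : 0 <= a <= 1 -> 0 <= b <= 1 ->
  `|plogp a - plogp b| <= 3 * Num.sqrt `|a - b|.
Proof.
wlog ab : a b / a <= b.
  move=> H ha hb; have [|ba] := leP a b; first by move=> ab; exact: H.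
  by rewrite distrC (distrC a); apply: H => //; exact: ltW.
move=> /andP[a0 a1] /andP[b0 b1].
rewrite !plogpE distrC (distrC a b) (ger0_norm (x := b - a)) ?subr_ge0 //.
set d := b - a.
have -> : b * ln b - a * ln a = d * ln b + a * (ln b - ln a) by rewrite /d; ring.
have t2 : 0 <= a * (ln b - ln a) <= d.
  have [->|apos] := eqVneq a 0; first by rewrite mul0r lexx /d subr_ge0.
  have a0' : 0 < a by rewrite lt_neqAle eq_sym apos.
  have b0' : 0 < b by exact: lt_le_trans ab.
  apply/andP; split.
    by rewrite mulr_ge0 // subr_ge0 ler_ln ?posrE.
  rewrite -ln_div ?posrE //.
  have e : b / a = 1 + (b / a - 1) by ring.
  have : ln (1 + (b / a - 1)) <= b / a - 1.
    apply: le_ln1Dx; have : 0 < b / a by rewrite divr_gt0.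
    lra.
  rewrite -e => h.
  have : a * ln (b / a) <= a * (b / a - 1) by apply: ler_wpM2l => //.
  by rewrite mulrBr mulrCA mulfV ?mulr1 ?mulr1 // /d.
have d0 : 0 <= d by rewrite /d subr_ge0.
have d1 : d <= 1 by rewrite /d; lra.
have sq : d <= Num.sqrt d.
  have [->|dpos] := eqVneq d 0; first by rewrite sqrtr0.
  have s0 : 0 <= Num.sqrt d by [].
  have sd : Num.sqrt d <= 1 by rewrite -sqrtr1 ler_wsqrtr.
  have ds : d = Num.sqrt d * Num.sqrt d by rewrite -expr2 sqr_sqrtr.
  rewrite {1}ds; nra.
have t1 : - (2 * Num.sqrt d) <= d * ln b <= 0.
  apply/andP; split; last first.
    by rewrite mulr_ge0_le0 // ln_le0.
  have [->|dpos] := eqVneq d 0; first by rewrite sqrtr0 !mul0r mulr0 oppr0.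
  have d0' : 0 < d by rewrite lt_neqAle eq_sym dpos.
  have db : d <= b by rewrite /d; lra.
  have : ln d <= ln b by rewrite ler_ln ?posrE //; exact: lt_le_trans db.
  move=> h; have := @nlogn_le _ d d0'.
  have : d * ln d <= d * ln b by apply: ler_wpM2l.
  lra.
have sq0 : 0 <= Num.sqrt d by [].
rewrite ler_norml; apply/andP; split; lra.
Qed.

Lemma term_le_sum (R : realType) (n : nat) (a : 'I_n -> R) i :
  (forall j, 0 <= a j) -> a i <= \sum_j a j.
Proof.
move=> h; rewrite (bigD1 i) //= lerDl; exact: sumr_ge0.
Qed.

Lemma sum_bound (R : realType) (n : nat) (a b : 'I_n -> R) (lam e K : R) :
  0 < lam -> 0 <= e -> n%:R <= K ->
  (forall i, 0 <= a i) -> (forall i, 0 <= b i) ->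
  lam <= \sum_i a i -> lam <= \sum_i b i ->
  (forall i, `|a i - b i| <= e) ->
  `|\sum_i plogp (a i / \sum_j a j) - \sum_i plogp (b i / \sum_j b j)|
    <= K * (3 * Num.sqrt ((e + K * e) / lam)).
Proof.
move=> l0 e0 nK a0 b0 la lb hab.
set La := \sum_j a j; set Lb := \sum_j b j.
have La0 : 0 < La by exact: lt_le_trans la.
have Lb0 : 0 < Lb by exact: lt_le_trans lb.
have dL : `|La - Lb| <= K * e.
  rewrite /La /Lb -sumrB; apply: le_trans (ler_norm_sum _ _ _) _.
  apply: le_trans (ler_sum _ (fun i _ => hab i)) _.
  rewrite sumr_const card_ord -mulr_natl; exact: ler_wpM2r.
have qa : forall i, 0 <= a i / La <= 1.
  move=> i; rewrite divr_ge0 ?a0 ?(ltW La0) //= ler_pdivrMr // mul1r.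
  exact: term_le_sum.
have qb : forall i, 0 <= b i / Lb <= 1.
  move=> i; rewrite divr_ge0 ?b0 ?(ltW Lb0) //= ler_pdivrMr // mul1r.
  exact: term_le_sum.
have hq : forall i, `|a i / La - b i / Lb| <= (e + K * e) / lam.
  move=> i.
  have -> : a i / La - b i / Lb = (a i - b i) / La + (b i / Lb) * ((Lb - La) / La).
    by field; apply/andP; split; rewrite gt_eqF.
  apply: le_trans (ler_normD _ _) _.
  rewrite [in X in _ <= X]mulrDl; apply: lerD.
    rewrite normrM normfV (gtr0_norm La0).
    apply: (@le_trans _ _ (e / La)); first by apply: ler_wpM2r; rewrite ?invr_ge0 ?(ltW La0).
    apply: ler_wpM2l => //; rewrite lef_pV2 ?posrE //.
  rewrite normrM ger0_norm; last by case/andP: (qb i).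
  apply: (@le_trans _ _ (1 * (K * e / lam))).
    apply: ler_pM; [by case/andP: (qb i) | by [] | by case/andP: (qb i) |].
    rewrite normrM normfV (gtr0_norm La0) distrC.
    apply: (@le_trans _ _ (K * e / La)); first by apply: ler_wpM2r; rewrite ?invr_ge0 ?(ltW La0).
    apply: ler_wpM2l; first by apply: le_trans dL.
    by rewrite lef_pV2 ?posrE.
  by rewrite mul1r.
rewrite -sumrB; apply: le_trans (ler_norm_sum _ _ _) _.
have := ler_sum (index_enum (ordinal n)) (P := xpredT) (fun i _ => @plogp_cont _ _ _ (qa i) (qb i)).
move=> h; apply: le_trans h _.
apply: (@le_trans _ _ (\sum_(i < n) 3 * Num.sqrt ((e + K * e) / lam))).
  apply: ler_sum => i _; apply: ler_wpM2l => //; exact: ler_wsqrtr.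
rewrite sumr_const card_ord.
have s0 : 0 <= 3 * Num.sqrt ((e + K * e) / lam) by rewrite mulr_ge0.
rewrite -(mulr_natl _ n); apply: ler_wpM2r => //.
Qed.

Lemma le_bigmax0 (R : realType) (I : eqType) (r : seq I) (F : I -> R) i :
  i \in r -> F i <= \big[Num.max/0]_(j <- r) F j.
Proof.
elim: r => [//|x r IH]; rewrite in_cons big_cons => /orP[/eqP ->|ir].
  by rewrite le_max lexx.
by rewrite le_max IH ?orbT.
Qed.

Lemma icost_ge0 (R : realType) (I J : R * R) : 0 <= icost I J.
Proof. by rewrite /icost le_max normr_ge0. Qed.

Lemma cost_le (R : realType) (p : \bar R) (hp : (1 <= p)%E) n (A B : barcode R)
  (s : 'S_n) (i : 'I_n) :
  icost (nth (0,0) A i) (nth (0,0) B (s i)) <= match_cost p A B s.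
Proof.
case: p hp => [r| |] //= hp.
  rewrite lee_fin in hp.
  have r0 : 0 < r by lra.
  set c := icost _ _.
  have -> : c = (c `^ r) `^ r^-1.
    by rewrite -powRrM mulfV ?gt_eqF // powRr1 // icost_ge0.
  apply: ge0_ler_powR; rewrite ?invr_ge0 ?(ltW r0) // ?nnegrE ?powR_ge0 ?sumr_ge0 //.
    by move=> j _; rewrite powR_ge0.
  apply: (@term_le_sum _ _ (fun j => icost (nth (0,0) A j) (nth (0,0) B (s j)) `^ r)).
  by move=> j; rewrite powR_ge0.
have := @le_bigmax0 R _ (index_enum (ordinal n)) (fun j => icost (nth (0,0) A j) (nth (0,0) B (s j))) i (mem_index_enum i).
exact.
Qed.

Lemma sum_pad (R : realType) (A : barcode R) (t : seq R) (F : R * R -> R) :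
  (forall x, F (x, x) = 0) -> \sum_(I <- pad A t) F I = \sum_(I <- A) F I.
Proof.
move=> h.
have E : \sum_(j <- t) F (j, j) = 0 by rewrite big1 // => x _; exact: h.
by rewrite /pad big_cat big_map /= E addr0.
Qed.

Lemma sum_nth (R : realType) (A : barcode R) (F : R * R -> R) :
  \sum_(I <- A) F I = \sum_(i < size A) F (nth (0,0) A i).
Proof. by rewrite (big_nth (0,0)) big_mkord. Qed.

Theorem proposition2 (R : realType) (p : \bar R) (hp : (1 <= p)%E)
  (N : nat) (hN : (0 < N)%N) (lam : R) (hlam : 0 < lam) :
  forall eps : R, 0 < eps ->
  exists2 delta : R, 0 < delta &
    forall A B : barcode R,
      wf_barcode A -> wf_barcode B ->
      (size A <= N)%N -> (size B <= N)%N ->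
      lam <= total_length A -> lam <= total_length B ->
      dW p A B <= delta -> `|pentropy A - pentropy B| <= eps.
Proof.
move=> eps e0.
set K : R := N%:R.
have K0 : 0 < K by rewrite /K ltr0n.
set X := eps / (3 * K).
have X0 : 0 < X by rewrite /X divr_gt0 // mulr_gt0.
pose delta := lam * X ^+ 2 / (4 * (1 + K)).
have d0 : 0 < delta.
  apply: divr_gt0; last lra.
  apply: mulr_gt0 => //; exact: exprn_gt0.
exists delta => //.
move=> A B wA wB sA sB lA lB hd.
move: hd; rewrite /dW.
set n := maxn (size A) (size B).
set S := (Y in inf Y <= _).
move=> hd.
have ne : (S !=set0)%classic.
  exists (@match_cost _ p n (pad A (nseq (n - size A) 0)) (pad B (nseq (n - size B) 0)) (1%g : {perm (ordinal n)})).
  exists (nseq (n - size A) 0), (nseq (n - size B) 0), 1%g.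
  by rewrite !size_nseq.
have : inf S < 2 * delta by apply: le_lt_trans hd _; lra.
case/(inf_lt ne) => c [ta [tb [s [hta [htb ->]]]]] hc.
set A' := pad A ta; set B' := pad B tb.
have szA : size A' = n by rewrite /A' /pad size_cat size_map hta subnKC // leq_maxl.
have szB : size B' = n by rewrite /B' /pad size_cat size_map htb subnKC // leq_maxr.
have wA' : wf_barcode A'.
  rewrite /wf_barcode /A' /pad all_cat; apply/andP; split; first exact: wA.
  by rewrite all_map; apply/allP => x _ /=.
have wB' : wf_barcode B'.
  rewrite /wf_barcode /B' /pad all_cat; apply/andP; split; first exact: wB.
  by rewrite all_map; apply/allP => x _ /=.
have ha : forall i : 'I_n, 0 <= ilen (nth (0,0) A' i).
  move=> i; have : nth (0,0) A' i \in A' by rewrite mem_nth // szA.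
  by move/(allP wA'); rewrite /ilen subr_ge0.
have hb : forall i : 'I_n, 0 <= ilen (nth (0,0) B' (s i)).
  move=> i; have : nth (0,0) B' (s i) \in B' by rewrite mem_nth // szB.
  by move/(allP wB'); rewrite /ilen subr_ge0.
have LA : total_length A = \sum_(i < n) ilen (nth (0,0) A' i).
  rewrite /total_length -(@sum_pad _ A ta (@ilen R)); last by move=> x; rewrite /ilen subrr.
  by rewrite sum_nth -/A' szA.
have LB : total_length B = \sum_(i < n) ilen (nth (0,0) B' (s i)).
  rewrite /total_length -(@sum_pad _ B tb (@ilen R)); last by move=> x; rewrite /ilen subrr.
  by rewrite sum_nth -/B' szB (reindex_inj (@perm_inj _ s)).
have EA : pentropy A = - \sum_(i < n) plogp (ilen (nth (0,0) A' i) / \sum_(j < n) ilen (nth (0,0) A' j)).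
  rewrite /pentropy -(@sum_pad _ A ta (fun I => plogp (ilen I / total_length A))); last first.
    by move=> x; rewrite /ilen subrr mul0r plogpE mul0r.
  by rewrite sum_nth -/A' szA LA.
have EB : pentropy B = - \sum_(i < n) plogp (ilen (nth (0,0) B' (s i)) / \sum_(j < n) ilen (nth (0,0) B' (s j))).
  rewrite /pentropy -(@sum_pad _ B tb (fun I => plogp (ilen I / total_length B))); last first.
    by move=> x; rewrite /ilen subrr mul0r plogpE mul0r.
  by rewrite sum_nth -/B' szB (reindex_inj (@perm_inj _ s)) LB.
rewrite EA EB -opprD normrN.
have nK : n%:R <= K by rewrite /K ler_nat geq_max sA sB.
have hab : forall i : 'I_n, `|ilen (nth (0,0) A' i) - ilen (nth (0,0) B' (s i))| <= 4 * delta.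
  move=> i; have := @cost_le _ _ hp _ A' B' s i.
  set I := nth _ A' i; set J := nth _ B' (s i) => hIJ.
  have h1 : `|I.1 - J.1| <= icost I J by rewrite /icost le_max lexx.
  have h2 : `|I.2 - J.2| <= icost I J by rewrite /icost le_max lexx orbT.
  have -> : ilen I - ilen J = (I.2 - J.2) - (I.1 - J.1) by rewrite /ilen; ring.
  apply: le_trans (ler_normB _ _) _; lra.
have hd0 : 0 <= 4 * delta by lra.
apply: le_trans (@sum_bound _ n (fun i => ilen (nth (0,0) A' i)) (fun i => ilen (nth (0,0) B' (s i))) lam (4 * delta) K hlam hd0 nK ha hb _ _ hab) _.
- by rewrite -LA.
- by rewrite -LB.
have -> : (4 * delta + K * (4 * delta)) / lam = X ^+ 2.
  rewrite /delta; field; apply/andP; split; rewrite gt_eqF //; lra.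
rewrite sqrtr_sqr ger0_norm ?(ltW X0) // /X.
have -> : K * (3 * (eps / (3 * K))) = eps by field; rewrite gt_eqF.
by [].
Qed.
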